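(* Let $(R,\mathfrak m)$ be a Noetherian local ring, $X$ a finitely generated $R$-module, $N$ a Burch submodule of $X$, $t\ge1$ an integer, and $M$ a finitely generated $R$-module with $\operatorname{Tor}_t^R(M,N)=\operatorname{Tor}_t^R(M,X/N)=0$. Then $\operatorname{pd}_R M<t$.
   Context: For a submodule $N\subseteq X$, $(N:_X\mathfrak m)=\{x\in X:\mathfrak m x\subseteq N\}$. $N$ is a Burch submodule of $X$ if $\mathfrak m(N:_X\mathfrak m)\neq\mathfrak m N$. The projective dimension of the zero module is $-\infty$. *)

(* Defs.v *)
(* Commutative algebra of finitely generated modules, set up
   concretely: submodules are Prop-valued predicates, Tor is computed from a
   finite free resolution given by matrices over R. *)
From mathcomp Require Import all_boot all_order all_algebra.
Set Implicit Arguments. Unset Strict Implicit. Unset Printing Implicit Defensive.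
Import GRing.Theory.
Local Open Scope ring_scope.

Section Defs.
Variable R : comNzRingType.

Definition ideal (I : R -> Prop) : Prop :=
  I 0 /\ (forall x y, I x -> I y -> I (x + y)) /\ (forall a x, I x -> I (a * x)).

Definition fg_ideal (I : R -> Prop) : Prop :=
  exists s : seq R, forall x, I x <-> exists c : 'I_(size s) -> R, x = \sum_i c i * s`_i.

Definition noetherian : Prop := forall I, ideal I -> fg_ideal I.

Definition unitR (x : R) : Prop := exists y, y * x = 1.

Definition local_ring (m : R -> Prop) : Prop :=
  ideal m /\ ~ m 1 /\ (forall x, ~ m x -> unitR x).

Definition submodule (X : lmodType R) (N : X -> Prop) : Prop :=
  N 0 /\ (forall x y, N x -> N y -> N (x + y)) /\ (forall a x, N x -> N (a *: x)).

Definition fg_module (X : lmodType R) : Prop :=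
  exists s : seq X, forall x : X, exists c : 'I_(size s) -> R, x = \sum_i c i *: s`_i.

Definition ideal_mul (X : lmodType R) (I : R -> Prop) (L : X -> Prop) : X -> Prop :=
  fun x => exists n (a : 'I_n -> R) (l : 'I_n -> X),
    (forall i, I (a i)) /\ (forall i, L (l i)) /\ x = \sum_i a i *: l i.

Definition colon (X : lmodType R) (N : X -> Prop) (m : R -> Prop) : X -> Prop :=
  fun x => forall a, m a -> N (a *: x).

Definition burch (X : lmodType R) (m : R -> Prop) (N : X -> Prop) : Prop :=
  ~ (forall x, ideal_mul m (colon N m) x <-> ideal_mul m N x).

(** Finite free resolutions  ... -> R^(b 2) -> R^(b 1) -> R^(b 0) -> M -> 0.
    Elements of R^(b i) are row vectors; the differential
    R^(b i.+1) -> R^(b i) is  u |-> u *m D i;  the augmentation sends the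
    j-th basis vector of R^(b 0) to g j. *)
Definition aug (M : lmodType R) (n : nat) (g : 'I_n -> M) (u : 'rV[R]_n) : M :=
  \sum_j u 0 j *: g j.

Definition free_resolution (M : lmodType R) (b : nat -> nat)
    (D : forall i, 'M[R]_(b i.+1, b i)) (g : 'I_(b 0) -> M) : Prop :=
  (forall x : M, exists u : 'rV[R]_(b 0), x = aug g u) /\
  (forall u : 'rV[R]_(b 0), aug g u = 0 <-> exists w : 'rV[R]_(b 1), u = w *m D 0) /\
  (forall i (u : 'rV[R]_(b i.+1)),
      u *m D i = 0 <-> exists w : 'rV[R]_(b i.+2), u = w *m D i.+1).

(** A *m - tensored with a module:  R^m ⊗ X = X^m  ->  R^n ⊗ X = X^n *)
Definition tmap (X : lmodType R) (m n : nat) (A : 'M[R]_(m, n)) (x : 'I_m -> X)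
  : 'I_n -> X := fun k => \sum_j A j k *: x j.

(** Tor_t^R(M, P/Q) = 0, computed from the free resolution (b, D) of M, for
    submodules Q ⊆ P of X (elements of (P/Q)^k are represented by tuples in
    P^k, modulo Q^k).  Tor_t = H_t(F ⊗ P/Q). *)
Definition Tor_vanishes (X : lmodType R) (b : nat -> nat)
    (D : forall i, 'M[R]_(b i.+1, b i)) (t : nat) (P Q : X -> Prop) : Prop :=
  match t with
  | 0 => forall x : 'I_(b 0) -> X, (forall j, P (x j)) ->
           exists y : 'I_(b 1) -> X, (forall j, P (y j)) /\
             (forall j, Q (x j - tmap (D 0) y j))
  | s.+1 => forall x : 'I_(b s.+1) -> X, (forall j, P (x j)) ->
           (forall k, Q (tmap (D s) x k)) ->
           exists y : 'I_(b s.+2) -> X, (forall j, P (y j)) /\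
             (forall j, Q (x j - tmap (D s.+1) y j))
  end.

(** pd_R M < t : M has a finite free resolution of length < t
    (M = 0 has the resolution with all b i = 0, matching pd 0 = -oo). *)
Definition pd_lt (M : lmodType R) (t : nat) : Prop :=
  exists (b : nat -> nat) (D : forall i, 'M[R]_(b i.+1, b i)) (g : 'I_(b 0) -> M),
    free_resolution D g /\ (forall i, (t <= i)%N -> b i = 0%N).

End Defs.

(* Main.v *)
Require Import Defs.
From mathcomp Require Import all_boot all_order all_algebra.
From mathcomp Require Import perm.
From Stdlib Require Import Classical.
Set Implicit Arguments. Unset Strict Implicit. Unset Printing Implicit Defensive.
Import GRing.Theory.
Local Open Scope ring_scope.

Definition minv (R : comNzRingType) n (P P' : 'M[R]_n) := P' *m P = 1%:M /\ P *m P' = 1%:M.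

Lemma minvM (R : comNzRingType) n (P P' Q Q' : 'M[R]_n) :
  minv P P' -> minv Q Q' -> minv (P *m Q) (Q' *m P').
Proof.
move=> [h1 h2] [h3 h4]; split.
  by rewrite mulmxA -(mulmxA Q') h1 mulmx1 h3.
by rewrite mulmxA -(mulmxA P) h4 mulmx1 h2.
Qed.

Lemma minv_tperm (R : comNzRingType) n (i j : 'I_n) :
  minv (tperm_mx i j : 'M[R]_n) (tperm_mx i j).
Proof. by rewrite /minv /tperm_mx -perm_mxM tperm2 perm_mx1. Qed.

Lemma pivot (R : comNzRingType) m k (C : 'M[R]_(1 + m, 1 + k)) i j y :
  y * C i j = 1 ->
  exists (P P' : 'M[R]_(1 + m)) (Q Q' : 'M[R]_(1 + k)) (C0 : 'M[R]_(m, k)), minv P P' /\ minv Q Q' /\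
    P *m C *m Q = block_mx (1%:M : 'M_1) 0 0 C0.
Proof.
move=> hy.
pose C1 : 'M[R]_(1 + m, 1 + k) := tperm_mx 0 i *m C *m tperm_mx 0 j.
set c := ulsubmx C1. set r := ursubmx C1. set l := dlsubmx C1. set d := drsubmx C1.
have hc : c = (C i j)%:M.
  rewrite [c]mx11_scalar; congr (_%:M).
  rewrite /c /C1 -xrowE -xcolE /xrow /xcol !mxE /=.
  have e1 : lshift m (0 : 'I_1) = 0 :> 'I_(1 + m) by apply/val_inj.
  have e2 : lshift k (0 : 'I_1) = 0 :> 'I_(1 + k) by apply/val_inj.
  by rewrite e1 e2 !tpermL.
have hcy : c *m y%:M = 1%:M by rewrite hc -scalar_mxM mulrC hy.
have hyc : y%:M *m c = 1%:M by rewrite hc -scalar_mxM hy.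
pose P1 : 'M[R]_(1 + m) := block_mx y%:M 0 (- (l *m y%:M)) 1%:M.
pose P1' : 'M[R]_(1 + m) := block_mx c 0 l 1%:M.
pose Q1 : 'M[R]_(1 + k) := block_mx 1%:M (- (y%:M *m r)) 0 1%:M.
pose Q1' : 'M[R]_(1 + k) := block_mx 1%:M (y%:M *m r) 0 1%:M.
have mP : minv P1 P1'.
  split; rewrite /P1 /P1' mulmx_block (scalar_mx_block 1 m) ?mulmx0 ?mul0mx ?addr0 ?add0r ?mulmx1 ?mul1mx.
    by rewrite hcy addrN.
  by rewrite hyc mulNmx -mulmxA hyc mulmx1 addNr.
have mQ : minv Q1 Q1'.
  split; rewrite /Q1 /Q1' mulmx_block (scalar_mx_block 1 k) ?mulmx0 ?mul0mx ?addr0 ?add0r ?mulmx1 ?mul1mx.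
    by rewrite addNr.
  by rewrite addrN.
exists (P1 *m tperm_mx 0 i), (tperm_mx 0 i *m P1'), (tperm_mx 0 j *m Q1), (Q1' *m tperm_mx 0 j),
  (d - l *m (y%:M *m r)).
split; first exact: minvM mP (minv_tperm _ _ _).
split; first exact: minvM (minv_tperm _ _ _) mQ.
have -> : P1 *m tperm_mx 0 i *m C *m (tperm_mx 0 j *m Q1) = P1 *m C1 *m Q1.
  by rewrite /C1 !mulmxA.
rewrite -[C1]submxK /P1 /Q1 -/c -/r -/l -/d !mulmx_block.
rewrite ?mulmx0 ?mul0mx ?addr0 ?add0r ?mulmx1 ?mul1mx.
rewrite hyc mul1mx addNr mulNmx -mulmxA hyc mulmx1 addNr mul0mx add0r.
by rewrite mulNmx -mulmxA addrC.
Qed.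

Definition inm (R : comNzRingType) (m : R -> Prop) a b (M : 'M[R]_(a, b)) := forall i j, m (M i j).

Lemma ideal_sum (R : comNzRingType) (m : R -> Prop) (I : finType) (F : I -> R) :
  ideal m -> (forall i, m (F i)) -> m (\sum_i F i).
Proof.
move=> [h0 [hD hM]] hF; elim/big_ind: _ => //; exact: hD.
Qed.

Lemma inm_mull (R : comNzRingType) (m : R -> Prop) a b c (A : 'M[R]_(a, b)) (B : 'M[R]_(b, c)) :
  ideal m -> inm m A -> inm m (A *m B).
Proof.
move=> hm hA i j; rewrite mxE; apply: ideal_sum => // k.
by rewrite mulrC; case: hm => _ [_ hM]; apply: hM.
Qed.

Lemma inm_mulr (R : comNzRingType) (m : R -> Prop) a b c (A : 'M[R]_(a, b)) (B : 'M[R]_(b, c)) :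
  ideal m -> inm m B -> inm m (A *m B).
Proof.
move=> hm hB i j; rewrite mxE; apply: ideal_sum => // k.
by case: hm => _ [_ hM]; apply: hM.
Qed.

Lemma inm_row0 (R : comNzRingType) (m : R -> Prop) a b c (A : 'M[R]_(a, c)) :
  ideal m -> inm m A -> inm m (row_mx (0 : 'M_(a, b)) A).
Proof.
move=> hm hA i j; rewrite mxE; case: splitP => k _; last exact: hA.
by rewrite mxE; case: hm.
Qed.

Lemma inm_col0 (R : comNzRingType) (m : R -> Prop) a b c (A : 'M[R]_(a, c)) :
  ideal m -> inm m A -> inm m (col_mx (0 : 'M_(b, c)) A).
Proof.
move=> hm hA i j; rewrite mxE; case: splitP => k _; last exact: hA.
by rewrite mxE; case: hm.
Qed.

Lemma row0_col0 (R : comNzRingType) a b c d (u : 'M[R]_(a, c)) (f : 'M[R]_(c, d)) :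
  row_mx (0 : 'M_(a, b)) u *m col_mx (0 : 'M_(b, d)) f = u *m f.
Proof. by rewrite mul_row_col mul0mx add0r. Qed.

Lemma row0_blk (R : comNzRingType) a b c (u : 'M[R]_(a, b)) (M : 'M[R]_(b, c)) :
  row_mx (0 : 'M_(a, 1)) u *m block_mx (1%:M : 'M_1) 0 0 M = row_mx 0 (u *m M).
Proof. by rewrite mul_row_block !mul0mx !mulmx0 ?add0r ?addr0. Qed.

Lemma rowx_blk (R : comNzRingType) a b c (x : 'M[R]_(a, 1)) (u : 'M[R]_(a, b)) (M : 'M[R]_(b, c)) :
  row_mx x u *m block_mx (1%:M : 'M_1) 0 0 M = row_mx x (u *m M).
Proof. by rewrite mul_row_block !mulmx0 !mulmx1 addr0 add0r. Qed.

Lemma blk_col0 (R : comNzRingType) b c d (f : 'M[R]_(c, d)) (M : 'M[R]_(b, c)) :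
  block_mx (1%:M : 'M_1) 0 0 M *m col_mx (0 : 'M_(1, d)) f = col_mx 0 (M *m f).
Proof. by rewrite mul_block_col !mul0mx !mulmx0 ?add0r ?addr0 ?mul1mx. Qed.

Lemma LA (R : comNzRingType) (m : R -> Prop) : ideal m -> local_ring m -> forall n p q
  (B : 'M[R]_(p, n)) (A : 'M[R]_(n, q)),
  B *m A = 0 ->
  (forall u : 'rV_n, u *m A = 0 -> exists w : 'rV_p, u = w *m B) ->
  (forall (u : 'rV_n) (f : 'cV_n), inm m (u *m A) -> inm m (B *m f) -> m ((u *m f) 0 0)) ->
  exists q' (E : 'M[R]_(q', q)), (forall v : 'rV_q, exists w z, v = w *m A + z *m E) /\
    (forall (w : 'rV_n) (z : 'rV_q'), w *m A + z *m E = 0 -> z = 0).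
Proof.
move=> hm [_ [hm1 hu]]; elim=> [|n IH] p q B A hBA hex hkey.
  exists q, 1%:M; split.
    by move=> v; exists 0, v; rewrite mul0mx add0r mulmx1.
  by move=> w z; rewrite [w]thinmx0 mul0mx add0r mulmx1.
move: B A hBA hex hkey; rewrite -[n.+1]/(1 + n) => B A hBA hex hkey.
case: (classic (exists i j, ~ m (A i j))) => [[i [j hij]] | hall].
  move: hBA hex hkey i j hij; case: q A => [|q] A hBA hex hkey i j hij; first by case: j hij.
  move: A hBA hex hkey i j hij; rewrite -[q.+1]/(1 + q) => A hBA hex hkey i j hij.
  have [y hy] := hu _ hij.
  have [P [P' [Q [Q' [A0 [[hP1 hP2] [[hQ1 hQ2] hC]]]]]]] := pivot hy.
  set C := block_mx _ _ _ _ in hC.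
  have hPA : P *m A = C *m Q' by rewrite -hC -(mulmxA (P *m A)) hQ2 mulmx1.
  set B' := B *m P'.
  have hB'C : B' *m C = 0.
    by rewrite /B' -hC !mulmxA -(mulmxA B) hP1 mulmx1 hBA !mul0mx.
  have eB' : B' = row_mx (lsubmx (B' : 'M_(p, 1 + n))) (rsubmx (B' : 'M_(p, 1 + n))) by rewrite hsubmxK.
  set B0 := rsubmx _ in eB'.
  move: hB'C; rewrite eB' /C. rewrite mul_row_block !mulmx0 mulmx1 addr0 add0r -row_mx0.
  move=> /eq_row_mx [hl0 hB0A0].
  rewrite hl0 in eB'.
  have [q' [E0 [hsp hind]]] : exists q' (E : 'M[R]_(q', q)),
      (forall v : 'rV_q, exists w z, v = w *m A0 + z *m E) /\
      (forall w (z : 'rV_q'), w *m A0 + z *m E = 0 -> z = 0).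
    apply: (IH _ _ B0) => //.
      move=> u0 hu0.
      have : (row_mx 0 u0 *m P) *m A = 0.
        by rewrite -mulmxA hPA mulmxA row0_blk hu0 row_mx0 mul0mx.
      move=> /hex [w hw].
      exists w.
      have := congr1 (mulmx^~ P') hw.
      rewrite -mulmxA hP2 mulmx1 -mulmxA -/B' eB' mul_mx_row mulmx0.
      by move=> /eq_row_mx [].
    move=> u0 f0 hu0 hf0.
    have := hkey (row_mx 0 u0 *m P) (P' *m col_mx 0 f0).
    rewrite -mulmxA hPA mulmxA row0_blk (mulmxA B) -/B' eB' row0_col0.
    rewrite -(mulmxA (row_mx 0 u0)) (mulmxA P) hP2 mul1mx row0_col0.
    apply.
      by apply: inm_mull => //; apply: inm_row0.
    exact: hf0.
  exists q', (row_mx 0 E0 *m Q'); split.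
    move=> v.
    have eV : v *m Q = row_mx (lsubmx (v *m Q : 'rV_(1 + q))) (rsubmx (v *m Q : 'rV_(1 + q))) by rewrite hsubmxK.
    have [w0 [z0 hz]] := hsp (rsubmx (v *m Q : 'rV_(1 + q))).
    exists (row_mx (lsubmx (v *m Q : 'rV_(1 + q))) w0 *m P), z0.
    rewrite -mulmxA hPA !mulmxA -mulmxDl rowx_blk mul_mx_row mulmx0 add_row_mx addr0 -hz -eV.
    by rewrite -mulmxA hQ2 mulmx1.
  move=> w z hwz.
  have := congr1 (mulmx^~ Q) hwz.
  rewrite mul0mx mulmxDl -!mulmxA hQ1 mulmx1.
  have -> : A *m Q = P' *m C by rewrite -hC !mulmxA hP1 mul1mx.
  rewrite mulmxA.
  have eW : w *m P' = row_mx (lsubmx (w *m P' : 'rV_(1 + _))) (rsubmx (w *m P' : 'rV_(1 + _))) by rewrite hsubmxK.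
  rewrite eW rowx_blk mul_mx_row mulmx0 add_row_mx addr0 -row_mx0.
  by move=> /eq_row_mx [_ /hind].
have hA : inm m A.
  by move=> i j; apply: NNPP => hn; apply: hall; exists i, j.
have [i hi] : exists i, ~ m (B i 0).
  apply: NNPP => hn; apply: hm1.
  have := hkey (delta_mx 0 0 : 'rV_(1 + n)) (delta_mx 0 0 : 'cV_(1 + n)).
  have -> : ((delta_mx 0 0 : 'rV[R]_(1 + n)) *m (delta_mx 0 0 : 'cV[R]_(1 + n))) 0 0 = 1.
    rewrite mxE (bigD1 0) //= big1 ?addr0 => [|r /negbTE hr].
      by rewrite !mxE !eqxx mulr1.
    by rewrite !mxE hr mulr0.
  apply; first by apply: inm_mulr.
  move=> k l; rewrite mxE (bigD1 0) //= big1 ?addr0.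
    have -> : l = 0 by apply: ord1.
    rewrite !mxE !eqxx /= mulr1.
    by apply: NNPP => h; apply: hn; exists k.
  by move=> r /negbTE hr; rewrite !mxE hr mulr0.
move: hBA hex hkey i hi; case: p B => [|p] B hBA hex hkey i hi; first by case: i hi.
move: B hBA hex hkey i hi; rewrite -[p.+1]/(1 + p) => B hBA hex hkey i hi.
have [y hy] := hu _ hi.
have [P [P' [Q [Q' [B0 [[hP1 hP2] [[hQ1 hQ2] hC]]]]]]] := pivot hy.
set C := block_mx _ _ _ _ in hC.
have hBQ : B *m Q = P' *m C by rewrite -hC !mulmxA hP1 mul1mx.
set A2 := Q' *m A.
have hCA2 : C *m A2 = 0.
  by rewrite /A2 -hC mulmxA -(mulmxA _ Q) hQ2 mulmx1 -mulmxA hBA mulmx0.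
have eA2 : A2 = col_mx (usubmx (A2 : 'M_(1 + n, q))) (dsubmx (A2 : 'M_(1 + n, q))) by rewrite vsubmxK.
set A0 := dsubmx _ in eA2.
move: hCA2; rewrite eA2 /C mul_block_col !mul0mx mul1mx addr0 add0r -col_mx0.
move=> /eq_col_mx [hu0 hB0A0].
rewrite hu0 in eA2.
have hA2 : A = Q *m A2 by rewrite /A2 mulmxA hQ2 mul1mx.
have [q' [E [hsp hind]]] : exists q' (E : 'M[R]_(q', q)),
    (forall v : 'rV_q, exists w z, v = w *m A0 + z *m E) /\
    (forall w (z : 'rV_q'), w *m A0 + z *m E = 0 -> z = 0).
  apply: (IH _ _ B0) => //.
    move=> u0 hu0'.
    have : (row_mx 0 u0 *m Q') *m A = 0.
      by rewrite -mulmxA -/A2 eA2 row0_col0.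
    move=> /hex [w hw].
    have := congr1 (mulmx^~ Q) hw.
    rewrite -mulmxA hQ1 mulmx1 -mulmxA hBQ mulmxA.
    have eW : w *m P' = row_mx (lsubmx (w *m P' : 'rV_(1 + _))) (rsubmx (w *m P' : 'rV_(1 + _))) by rewrite hsubmxK.
    rewrite eW rowx_blk => /eq_row_mx [_ ->].
    by eexists.
  move=> u0 f0 hu0' hf0.
  have := hkey (row_mx 0 u0 *m Q') (Q *m col_mx 0 f0).
  rewrite -mulmxA -/A2 eA2 row0_col0 mulmxA hBQ -mulmxA blk_col0.
  rewrite -(mulmxA (row_mx 0 u0)) (mulmxA Q') hQ1 mul1mx row0_col0.
  apply => //.
  by apply: inm_mulr => //; apply: inm_col0.
exists q', E; split.
  move=> v; have [w0 [z0 hz]] := hsp v.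
  exists (row_mx 0 w0 *m Q'), z0.
  by rewrite -mulmxA -/A2 eA2 row0_col0.
move=> w z.
rewrite hA2 mulmxA eA2.
have eW : w *m Q = row_mx (lsubmx (w *m Q : 'rV_(1 + n))) (rsubmx (w *m Q : 'rV_(1 + n))) by rewrite hsubmxK.
by rewrite eW mul_row_col mulmx0 add0r => /hind.
Qed.

Lemma tmap_comp (R : comNzRingType) (X : lmodType R) a b c (B : 'M[R]_(a, b)) (A : 'M[R]_(b, c))
  (y : 'I_a -> X) k : tmap A (tmap B y) k = tmap (B *m A) y k.
Proof.
rewrite /tmap; under eq_bigr do rewrite scaler_sumr.
rewrite exchange_big /=; apply: eq_bigr => l _.
rewrite mxE scaler_suml; apply: eq_bigr => j _.
by rewrite scalerA mulrC.
Qed.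

Lemma mN_zero (R : comNzRingType) (X : lmodType R) (m : R -> Prop) (N : X -> Prop) :
  ideal_mul m N 0.
Proof. by exists 0%N, (fun _ => 0), (fun _ => 0); split; [case|split; [case|rewrite big_ord0]]. Qed.

Lemma mN_gen (R : comNzRingType) (X : lmodType R) (m : R -> Prop) (N : X -> Prop) a x :
  m a -> N x -> ideal_mul m N (a *: x).
Proof.
move=> ha hx; exists 1%N, (fun _ => a), (fun _ => x); split=> //; split=> //.
by rewrite big_ord1.
Qed.

Lemma mN_add (R : comNzRingType) (X : lmodType R) (m : R -> Prop) (N : X -> Prop) x y :
  ideal_mul m N x -> ideal_mul m N y -> ideal_mul m N (x + y).
Proof.
move=> [n1 [a1 [l1 [ha1 [hl1 ->]]]]] [n2 [a2 [l2 [ha2 [hl2 ->]]]]].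
exists (n1 + n2)%N, (fun i => match split i with inl j => a1 j | inr j => a2 j end),
  (fun i => match split i with inl j => l1 j | inr j => l2 j end).
split; first by move=> i; case: (split i).
split; first by move=> i; case: (split i).
rewrite big_split_ord /=; congr (_ + _); apply: eq_bigr => i _.
  by rewrite (unsplitK (inl i)).
by rewrite (unsplitK (inr i)).
Qed.

Lemma mN_sum (R : comNzRingType) (X : lmodType R) (m : R -> Prop) (N : X -> Prop) k (F : 'I_k -> X) :
  (forall i, ideal_mul m N (F i)) -> ideal_mul m N (\sum_i F i).
Proof.
move=> hF; elim/big_ind: _ => //; [exact: mN_zero | exact: mN_add].
Qed.

Lemma mN_smul (R : comNzRingType) (X : lmodType R) (m : R -> Prop) (N : X -> Prop) r x :
  ideal m -> ideal_mul m N x -> ideal_mul m N (r *: x).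
Proof.
move=> [_ [_ hM]] [n [a [l [ha [hl ->]]]]].
exists n, (fun i => r * a i), l; split; first by move=> i; apply: hM.
split=> //; rewrite scaler_sumr; apply: eq_bigr => i _; by rewrite scalerA.
Qed.

Lemma sub_sum (R : comNzRingType) (X : lmodType R) (N : X -> Prop) k (F : 'I_k -> X) :
  submodule N -> (forall i, N (F i)) -> N (\sum_i F i).
Proof. move=> [h0 [hD _]] hF; elim/big_ind: _ => //. Qed.

Lemma sub_opp (R : comNzRingType) (X : lmodType R) (N : X -> Prop) x y :
  submodule N -> N x -> N y -> N (x - y).
Proof.
move=> [h0 [hD hZ]] hx hy; apply: hD => //.
by rewrite -scaleN1r; apply: hZ.
Qed.

Lemma burch_elt (R : comNzRingType) (X : lmodType R) (m : R -> Prop) (N : X -> Prop) :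
  ideal m -> submodule N -> burch m N ->
  exists x a, colon N m x /\ m a /\ ~ ideal_mul m N (a *: x).
Proof.
move=> hm hN hb; apply: NNPP => hn; apply: hb => z; split; last first.
  move=> [n [a [l [ha [hl ->]]]]]; exists n, a, l; split=> //; split=> // i b hb'.
  by case: hN => _ [_ hZ]; apply: hZ.
move=> [n [a [l [ha [hl ->]]]]]; apply: mN_sum => i.
apply: NNPP => hni; apply: hn; exists (l i), (a i); split=> //.
Qed.

Lemma key (R : comNzRingType) (m : R -> Prop) (X : lmodType R) (N : X -> Prop) (s : nat)
  (b : nat -> nat) (D : forall i, 'M[R]_(b i.+1, b i)) :
  ideal m -> local_ring m -> submodule N -> burch m N ->
  D s.+1 *m D s = 0 ->
  Tor_vanishes D s.+1 N (fun x => x = 0) ->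
  Tor_vanishes D s.+1 (fun _ => True) N ->
  forall (u : 'rV_(b s.+1)) (f : 'cV_(b s.+1)),
    inm m (u *m D s) -> inm m (D s.+1 *m f) -> m ((u *m f) 0 0).
Proof.
move=> hm [_ [hm1 hunit]] hN hb hBA T1 T2 u f hu hf.
have [x [a [hx [ha hax]]]] := burch_elt hm hN hb.
apply: NNPP => hnm; have [v hv] := hunit _ hnm.
have [hN0 [hND hNZ]] := hN.
pose xv := fun j => u 0 j *: x.
have hxv : forall k, N (tmap (D s) xv k).
  move=> k; have -> : tmap (D s) xv k = (u *m D s) 0 k *: x.
    rewrite /tmap mxE scaler_suml; apply: eq_bigr => j _.
    by rewrite /xv scalerA mulrC.
  exact: hx.
have [y [_ hy]] := T2 xv (fun _ => I) hxv.
pose c := fun j => a *: tmap (D s.+1) y j.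
have hc : forall j, N (c j).
  move=> j; rewrite /c.
  have -> : tmap (D s.+1) y j = xv j - (xv j - tmap (D s.+1) y j).
    by rewrite opprB addrC subrK.
  rewrite scalerBr; apply: sub_opp => //; last exact: hNZ.
  by rewrite /xv scalerA mulrC -scalerA; apply: hNZ; apply: hx.
have hcc : forall k, tmap (D s) c k = 0.
  move=> k.
  have -> : tmap (D s) c k = a *: tmap (D s) (tmap (D s.+1) y) k.
    rewrite /tmap scaler_sumr; apply: eq_bigr => j _.
    by rewrite /c scalerA mulrC -scalerA.
  by rewrite tmap_comp hBA /tmap big1 ?scaler0 // => l _; rewrite mxE scale0r.
have [z [hz hcz]] := T1 c hc hcc.
pose S := \sum_j f j 0 *: c j.
have hS1 : ideal_mul m N S.
  have -> : S = \sum_l (D s.+1 *m f) l 0 *: z l.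
    rewrite /S.
    have -> : \sum_j f j 0 *: c j = \sum_j f j 0 *: tmap (D s.+1) z j.
      by apply: eq_bigr => j _; move/eqP: (hcz j); rewrite subr_eq0 => /eqP ->.
    rewrite /tmap; under eq_bigr do rewrite scaler_sumr.
    rewrite exchange_big /=; apply: eq_bigr => l _.
    rewrite mxE scaler_suml; apply: eq_bigr => j _.
    by rewrite scalerA mulrC.
  by apply: mN_sum => l; apply: mN_gen.
have hS2 : S = (a * (u *m f) 0 0) *: x - a *: \sum_j f j 0 *: (xv j - tmap (D s.+1) y j).
  rewrite /S scaler_sumr mxE mulr_sumr scaler_suml -sumrB; apply: eq_bigr => j _.
  rewrite /c /xv scalerBr scalerBr !scalerA.
  have -> : a * f j 0 * u 0 j = a * (u 0 j * f j 0) by rewrite -mulrA [f j 0 * _]mulrC.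
  by rewrite opprB addrC subrK [f j 0 * a]mulrC.
apply: hax.
have -> : a *: x = v *: ((a * (u *m f) 0 0) *: x).
  by rewrite scalerA mulrCA hv mulr1.
apply: mN_smul => //.
have -> : (a * (u *m f) 0 0) *: x = S + a *: \sum_j f j 0 *: (xv j - tmap (D s.+1) y j).
  by rewrite hS2 subrK.
apply: mN_add => //; apply: mN_gen => //.
by apply: sub_sum => // j; apply: hNZ.
Qed.

Definition ex3 (R : comNzRingType) n0 n1 n2 (M1 : 'M[R]_(n1, n0)) (M2 : 'M[R]_(n2, n1)) :=
  forall u : 'rV_n1, u *m M1 = 0 <-> exists w : 'rV_n2, u = w *m M2.

Definition augex (R : comNzRingType) (M : lmodType R) n0 n1 (g : 'I_n0 -> M) (M2 : 'M[R]_(n1, n0)) :=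
  forall u : 'rV_n0, aug g u = 0 <-> exists w : 'rV_n1, u = w *m M2.

Definition getm (R : comNzRingType) m n (M : 'M[R]_(m, n)) (k l : nat) : R :=
  match (insub k : option 'I_m), (insub l : option 'I_n) with
  | Some i, Some j => M i j | _, _ => 0 end.

Lemma getmE (R : comNzRingType) m n (M : 'M[R]_(m, n)) (i : 'I_m) (j : 'I_n) : getm M i j = M i j.
Proof. by rewrite /getm !valK. Qed.

Lemma ex3_tr (R : comNzRingType) n0 n1 n2 n0' n1' n2' (M1 : 'M[R]_(n1, n0)) (M2 : 'M[R]_(n2, n1))
  (M1' : 'M[R]_(n1', n0')) (M2' : 'M[R]_(n2', n1')) :
  n0' = n0 -> n1' = n1 -> n2' = n2 -> (forall k l, M1' k l = getm M1 k l) ->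
  (forall k l, M2' k l = getm M2 k l) -> ex3 M1 M2 -> ex3 M1' M2'.
Proof.
move=> e0 e1 e2; subst => h1 h2.
have -> : M1' = M1 by apply/matrixP => k l; rewrite h1 getmE.
by have -> : M2' = M2 by apply/matrixP => k l; rewrite h2 getmE.
Qed.

Lemma augex_tr (R : comNzRingType) (M : lmodType R) n0 n1 n1' (g : 'I_n0 -> M) (M2 : 'M[R]_(n1, n0))
  (M2' : 'M[R]_(n1', n0)) :
  n1' = n1 -> (forall k l, M2' k l = getm M2 k l) -> augex g M2 -> augex g M2'.
Proof.
move=> e1; subst => h2.
by have -> : M2' = M2 by apply/matrixP => k l; rewrite h2 getmE.
Qed.

Lemma ex3_0 (R : comNzRingType) n0 n1 n2 (M1 : 'M[R]_(n1, n0)) (M2 : 'M[R]_(n2, n1)) :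
  n1 = 0%N -> ex3 M1 M2.
Proof.
move=> e; subst=> u; rewrite [u]thinmx0 mul0mx; split=> // _.
by exists 0; rewrite mul0mx.
Qed.

Lemma ex3_mul0 (R : comNzRingType) n0 n1 n2 (M1 : 'M[R]_(n1, n0)) (M2 : 'M[R]_(n2, n1)) :
  ex3 M1 M2 -> M2 *m M1 = 0.
Proof.
move=> h; apply/row_matrixP => i; rewrite row_mul row0.
by apply/h; exists (delta_mx 0 i); rewrite -rowE.
Qed.

Lemma aug_add (R : comNzRingType) (M : lmodType R) n (g : 'I_n -> M) u v :
  aug g (u + v) = aug g u + aug g v.
Proof. by rewrite /aug -big_split; apply: eq_bigr => j _; rewrite mxE scalerDl. Qed.

Lemma aug_mul (R : comNzRingType) (M : lmodType R) n k (g : 'I_n -> M) (z : 'rV[R]_k) (E : 'M[R]_(k, n)) :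
  aug g (z *m E) = aug (fun i => aug g (row i E)) z.
Proof.
rewrite /aug; under eq_bigr do rewrite mxE scaler_suml.
rewrite exchange_big /=; apply: eq_bigr => i _.
rewrite scaler_sumr; apply: eq_bigr => j _; by rewrite mxE scalerA.
Qed.

Lemma aug0 (R : comNzRingType) (M : lmodType R) n (g : 'I_n -> M) : aug g 0 = 0.
Proof. by rewrite /aug big1 // => j _; rewrite mxE scale0r. Qed.

Lemma G2 (R : comNzRingType) n0 n1 na nb q' (M1 : 'M[R]_(n1, n0)) (M2 : 'M[R]_(nb, n1))
  (A : 'M[R]_(na, nb)) (E : 'M[R]_(q', nb)) :
  ex3 M1 M2 -> A *m M2 = 0 -> (forall v : 'rV_nb, exists w z, v = w *m A + z *m E) ->
  ex3 M1 (E *m M2).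
Proof.
move=> h hA hsp u; split.
  move=> /h [w ->]; have [w1 [z ->]] := hsp w.
  by exists z; rewrite mulmxDl -mulmxA hA mulmx0 add0r mulmxA.
by move=> [w ->]; apply/h; exists (w *m E); rewrite mulmxA.
Qed.

Lemma G2aug (R : comNzRingType) (M : lmodType R) n0 na nb q' (g : 'I_n0 -> M) (M2 : 'M[R]_(nb, n0))
  (A : 'M[R]_(na, nb)) (E : 'M[R]_(q', nb)) :
  augex g M2 -> A *m M2 = 0 -> (forall v : 'rV_nb, exists w z, v = w *m A + z *m E) ->
  augex g (E *m M2).
Proof.
move=> h hA hsp u; split.
  move=> /h [w ->]; have [w1 [z ->]] := hsp w.
  by exists z; rewrite mulmxDl -mulmxA hA mulmx0 add0r mulmxA.
by move=> [w ->]; apply/h; exists (w *m E); rewrite mulmxA.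
Qed.

Lemma G3 (R : comNzRingType) n0 na nb q' (M : 'M[R]_(nb, n0))
  (A : 'M[R]_(na, nb)) (E : 'M[R]_(q', nb)) :
  ex3 M A -> (forall (w : 'rV_na) (z : 'rV_q'), w *m A + z *m E = 0 -> z = 0) ->
  ex3 (E *m M) (0 : 'M_(0, q')).
Proof.
move=> h hind u; split.
  rewrite mulmxA => /h [w hw].
  have : (- w) *m A + u *m E = 0 by rewrite hw mulNmx addNr.
  by move=> /hind ->; exists 0; rewrite mulmx0.
by move=> [w ->]; rewrite mulmx0 mul0mx.
Qed.

Lemma build (R : comNzRingType) (M : lmodType R) (b : nat -> nat) (D : forall i, 'M[R]_(b i.+1, b i))
  (g : 'I_(b 0) -> M) s q' (E : 'M[R]_(q', b s)) :
  free_resolution D g ->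
  (forall v : 'rV_(b s), exists w z, v = w *m D s + z *m E) ->
  (forall (w : 'rV_(b s.+1)) (z : 'rV_q'), w *m D s + z *m E = 0 -> z = 0) ->
  pd_lt M s.+1.
Proof.
move=> [hsurj [haug hex]] hsp hind.
case: s E hsp hind => [|s] E hsp hind.
  pose b' := fun i => match i with 0 => q' | _ => 0%N end.
  pose D' : forall i, 'M[R]_(b' i.+1, b' i) := fun i => 0.
  exists b', D', (fun k => aug g (row k E)); split; last by case.
  split.
    move=> x; have [u ->] := hsurj x; have [w [z ->]] := hsp u.
    exists z; rewrite aug_add -aug_mul.
    have -> : aug g (w *m D 0) = 0 by apply/haug; exists w.
    by rewrite add0r.
  split; last by move=> i; apply: ex3_0.
  move=> u; split; last by move=> [w ->]; rewrite mulmx0 aug0.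
  rewrite -aug_mul => /haug [w hw].
  have : (- w) *m D 0 + u *m E = 0 by rewrite hw mulNmx addNr.
  by move=> /hind ->; exists 0; rewrite mulmx0.
pose b' := fun i => if (i <= s)%N then b i else if i == s.+1 then q' else 0%N.
have hb1 : forall i, (i <= s)%N -> b' i = b i by move=> i hi; rewrite /b' hi.
have hb2 : b' s.+1 = q' by rewrite /b' ltnn eqxx.
have hb3 : forall i, (s.+1 < i)%N -> b' i = 0%N.
  by move=> i hi; rewrite /b' leqNgt (ltnW hi) /= gtn_eqF.
pose D' : forall i, 'M[R]_(b' i.+1, b' i) := fun i => \matrix_(k, l)
  (if (i.+1 <= s)%N then getm (D i) k l else if i == s then getm (E *m D s) k l else 0).
have hD1 : forall i k l, (i.+1 <= s)%N -> D' i k l = getm (D i) k l.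
  by move=> i k l hi; rewrite /D' mxE hi.
have hD2 : forall k l, D' s k l = getm (E *m D s) k l.
  by move=> k l; rewrite /D' mxE ltnn eqxx.
have hAA : forall i, D i.+1 *m D i = 0 by move=> i; apply: ex3_mul0; apply: hex.
exists b', D', g; split; last first.
  by move=> i hi; apply: hb3.
split=> //; split.
  destruct s as [|s].
    apply: (augex_tr (M2 := E *m D 0)) => //.
    exact: (G2aug _ (hAA 0%N) hsp).
  apply: (augex_tr (M2 := D 0)) => //.
  by move=> k l; apply: hD1.
move=> i.
case: (ltngtP i.+1 s) => hi.
- apply: (ex3_tr (M1 := D i) (M2 := D i.+1)); last exact: hex.
  + by apply: hb1; apply: ltnW; apply: ltnW.
  + by apply: hb1; apply: ltnW.
  + exact: hb1.
  + by move=> k l; apply: hD1; apply: ltnW.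
  + by move=> k l; apply: hD1.
- case: (eqVneq i s) => [ei|hne].
    subst i.
    apply: (ex3_tr (M1 := E *m D s) (M2 := (0 : 'M_(0, q')))).
    + exact: hb1.
    + exact: hb2.
    + exact: hb3.
    + exact: hD2.
    + by move=> k; have := ltn_ord k; rewrite {2}hb3.
    + exact: (G3 (hex s) hind).
  apply: ex3_0; apply: hb3.
  by rewrite ltnS ltn_neqAle eq_sym hne -ltnS.
- subst s.
  apply: (ex3_tr (M1 := D i) (M2 := E *m D i.+1)).
  + by apply: hb1; apply: ltnW.
  + exact: hb1.
  + exact: hb2.
  + by move=> k l; apply: hD1.
  + exact: hD2.
  + exact: (G2 (hex i) (hAA i.+1) hsp).
Qed.

Theorem corollary3p13 (R : comNzRingType) (m : R -> Prop) (X M : lmodType R)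
    (N : X -> Prop) (t : nat) (b : nat -> nat) (D : forall i, 'M[R]_(b i.+1, b i))
    (g : 'I_(b 0) -> M) :
  noetherian R -> local_ring m ->
  fg_module X -> submodule N -> burch m N ->
  (1 <= t)%N ->
  fg_module M -> free_resolution D g ->
  Tor_vanishes D t N (fun x => x = 0) ->
  Tor_vanishes D t (fun _ => True) N ->
  pd_lt M t.
Proof.
move=> _ hloc _ hN hb ht _ hres T1 T2.
have hm : ideal m by case: hloc.
case: t ht T1 T2 => [|s] // _ T1 T2.
have hres' := hres.
case: hres' => [_ [_ hex]].
have hAA : D s.+1 *m D s = 0 by apply: ex3_mul0; exact: hex.
have hkey := key hm hloc hN hb hAA T1 T2.
have [q' [E [hsp hind]]] := @LA R m hm hloc _ _ _ (D s.+1) (D s) hAA (fun u hu => (hex s u).1 hu) hkey.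
exact: build hres hsp hind.
Qed.
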